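(* For every $\varphi\in\mathcal{L}_{\mathrm{CL}^{\mathrm{FI}}}$: $\vdash_{\mathrm{CL}^{\mathrm{FI}}}\varphi$ if and only if $\varphi$ is true at every state of every playable coalition model.
   Context: $N=\{1,\dots,n\}$ is a finite set of agents, $\mathrm{Prop}$ a countable set of atoms. $\mathcal{L}_{\mathrm{CL}}$: $\varphi ::= p\mid\neg\varphi\mid(\varphi\wedge\psi)\mid[C]\varphi$ ($C\subseteq N$); $\mathcal{L}_{\mathrm{CL}^{\mathrm{FI}}}$ additionally has the primitive $\mathrm{FI}_C(\varphi)$. Semantics: a coalition model is $\mathcal{M}=(W,E,V)$, $W$ nonempty, $E_w(C)\subseteq\mathcal{P}(W)$, $V:\mathrm{Prop}\to\mathcal{P}(W)$; Boolean clauses classical; $\mathcal{M},w\models[C]\varphi$ iff $[\![\varphi]\!]_{\mathcal{M}}=\{u\mid\mathcal{M},u\models\varphi\}\in E_w(C)$; $\mathcal{M},w\models\mathrm{FI}_C(\varphi)$ iff $[\![\varphi]\!]_{\mathcal{M}}\notin E_w(C)$ and $[\![\neg\varphi]\!]_{\mathcal{M}}\notin E_w(C)$. Playability of $E_w$: for all $C,D\subseteq N$, $X,Y\subseteq W$: $\emptyset\notin E_w(C)$; $W\in E_w(C)$; $X\in E_w(C)$, $X\subseteq Y$ imply $Y\in E_w(C)$; $C\cap D=\emptyset$, $X\in E_w(C)$, $Y\in E_w(D)$ imply $X\cap Y\in E_w(C\cup D)$; $X\notin E_w(\emptyset)$ iff $W\setminus X\in E_w(N)$; the model is playable if each $E_w$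 is. Proof system: Coalition Logic $\mathrm{CL}$ (Pauly) has all propositional tautologies; $\neg[C]\bot$; $[C]\top$; $\neg[\emptyset]\neg\varphi\to[N]\varphi$; $[C](\varphi\wedge\psi)\to[C]\varphi$; $[C_1]\varphi_1\wedge[C_2]\varphi_2\to[C_1\cup C_2](\varphi_1\wedge\varphi_2)$ for disjoint $C_1,C_2$; modus ponens; and rule RE: from $\varphi\leftrightarrow\psi$ infer $[C]\varphi\leftrightarrow[C]\psi$. $\mathrm{CL}^{\mathrm{FI}}$ is these schemes and rules over $\mathcal{L}_{\mathrm{CL}^{\mathrm{FI}}}$ plus the axiom $\mathrm{FI}_C(\varphi)\leftrightarrow(\neg[C]\varphi\wedge\neg[C]\neg\varphi)$. *)

(* Defs.v *)
From mathcomp Require Import all_boot.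
Set Implicit Arguments.
Unset Strict Implicit.
Unset Printing Implicit Defensive.

(* Agents N = 'I_n (n agents), coalitions C : {set 'I_n}, atoms Prop = nat. *)

Inductive form (n : nat) : Type :=
  | Atom : nat -> form n
  | Neg : form n -> form n
  | And : form n -> form n -> form n
  | Box : {set 'I_n} -> form n -> form n
  | FI : {set 'I_n} -> form n -> form n.

Arguments Atom {n}.

Definition Imp n (a b : form n) : form n := Neg (And a (Neg b)).
Definition Iff n (a b : form n) : form n := And (Imp a b) (Imp b a).
Definition Top n : form n := Neg (And (Atom 0) (Neg (Atom 0))).
Definition Bot n : form n := Neg (Top n).

(* Propositional evaluation where atoms and modal formulas ([C]phi, FI_C phi)
   are treated as propositional variables, valued by v. *)
Fixpoint peval n (v : form n -> bool) (f : form n) : bool :=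
  match f with
  | Atom p => v (Atom p)
  | Neg a => ~~ peval v a
  | And a b => peval v a && peval v b
  | Box C a => v (Box C a)
  | FI C a => v (FI C a)
  end.

Definition tautology n (f : form n) : Prop := forall v, peval v f = true.

Inductive provable (n : nat) : form n -> Prop :=
  | Ax_taut f : tautology f -> provable f
  | Ax_nobot C : provable (Neg (Box C (Bot n)))
  | Ax_top C : provable (Box C (Top n))
  | Ax_Nmax f : provable (Imp (Neg (Box set0 (Neg f))) (Box setT f))
  | Ax_mono C f g : provable (Imp (Box C (And f g)) (Box C f))
  | Ax_superadd (C1 C2 : {set 'I_n}) f1 f2 : [disjoint C1 & C2] ->
      provable (Imp (And (Box C1 f1) (Box C2 f2)) (Box (C1 :|: C2) (And f1 f2)))
  | Ax_FI C f : provable (Iff (FI C f) (And (Neg (Box C f)) (Neg (Box C (Neg f)))))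
  | R_MP f g : provable f -> provable (Imp f g) -> provable g
  | R_RE C f g : provable (Iff f g) -> provable (Iff (Box C f) (Box C g)).

Record model (n : nat) : Type := Model {
  st : Type;
  st_inhabited : inhabited st;
  eff : st -> {set 'I_n} -> (st -> Prop) -> Prop;
  val : nat -> st -> Prop
}.

Arguments st {n}.
Arguments st_inhabited {n}.
Arguments eff {n}.
Arguments val {n}.

Fixpoint sat n (M : model n) (w : st M) (f : form n) : Prop :=
  match f with
  | Atom p => val M p w
  | Neg a => ~ @sat n M w a
  | And a b => @sat n M w a /\ @sat n M w b
  | Box C a => eff M w C (fun u => @sat n M u a)
  | FI C a => ~ eff M w C (fun u => @sat n M u a) /\
              ~ eff M w C (fun u => ~ @sat n M u a)
  end.

Arguments sat {n} M w f.

Definition playable_at n (M : model n) (w : st M) : Prop :=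
  [/\ (forall C, ~ eff M w C (fun _ => False)),
      (forall C, eff M w C (fun _ => True)),
      (forall C (X Y : st M -> Prop),
          (forall x, X x -> Y x) -> eff M w C X -> eff M w C Y),
      (forall (C D : {set 'I_n}) (X Y : st M -> Prop), [disjoint C & D] ->
          eff M w C X -> eff M w D Y -> eff M w (C :|: D) (fun x => X x /\ Y x)) &
      (forall X : st M -> Prop,
          ~ eff M w set0 X <-> eff M w setT (fun x => ~ X x))].

Definition playable n (M : model n) : Prop := forall w : st M, playable_at w.

(* Main.v *)
Require Import Defs.
From mathcomp Require Import all_boot.
From Stdlib Require Import Classical ClassicalEpsilon.
From Stdlib Require List.
Import List.ListNotations.
Notation In := List.In.
Notation in_app_or := List.in_app_or.
Set Implicit Arguments.
Unset Strict Implicit.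

Fixpoint conjl {n} (l : list (form n)) : form n :=
  match l with nil => Top n | cons a l => And a (conjl l) end.

Lemma peval_conjl n v (l : list (form n)) :
  peval v (conjl l) = all (peval v) l.
Proof.
elim: l => [|a l IH] /=; last by rewrite IH.
by case: (v (Atom 0)).
Qed.

Lemma taut_imp n (a b : form n) :
  (forall v, peval v a -> peval v b) -> provable a -> provable b.
Proof.
move=> H Ha; apply: (R_MP Ha); apply: Ax_taut => v /=.
by case E: (peval v a) => //=; rewrite (H v E).
Qed.

Lemma prov_and n (a b : form n) : provable a -> provable b -> provable (And a b).
Proof.
move=> Ha Hb.
have H1 : provable (Imp a (Imp b (And a b))).
  by apply: Ax_taut => v /=; case: (peval v a); case: (peval v b).
have H2 := R_MP Ha H1.
exact: R_MP Hb H2.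
Qed.

Lemma prov_mp n (a b : form n) : provable a -> provable (Imp a b) -> provable b.
Proof. exact: R_MP. Qed.

Definition ded n (G : form n -> Prop) (g : form n) : Prop :=
  exists l, (forall x, In x l -> G x) /\ provable (Imp (conjl l) g).

Definition consistent n (G : form n -> Prop) := ~ ded G (Bot n).

Definition addf n (G : form n -> Prop) (g : form n) := fun x => G x \/ x = g.

Definition MCS n (G : form n -> Prop) :=
  consistent G /\ forall g, consistent (addf G g) -> G g.

Lemma ded_mono n (G H : form n -> Prop) g :
  (forall x, G x -> H x) -> ded G g -> ded H g.
Proof. move=> GH [l [Hl P]]; exists l; split => // x /Hl; exact: GH. Qed.

Lemma ded_ax n (G : form n -> Prop) a : G a -> ded G a.
Proof.
move=> Ga; exists (a :: nil); split; first by move=> x [E|[]]; rewrite -E.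
apply: Ax_taut => v /=; by case: (peval v a); case: (v (Atom 0)).
Qed.

Lemma ded_prov n (G : form n -> Prop) a : provable a -> ded G a.
Proof.
move=> Pa; exists nil; split => //.
apply: taut_imp Pa => v /= ->; by rewrite andbF.
Qed.

Lemma ded_and n (G : form n -> Prop) a b : ded G a -> ded G b -> ded G (And a b).
Proof.
move=> [l1 [H1 P1]] [l2 [H2 P2]]; exists (l1 ++ l2); split.
  by move=> x Hx; case: (List.in_app_or _ _ _ Hx) => [/H1|/H2].
apply: taut_imp (prov_and P1 P2) => v /=.
rewrite !peval_conjl all_cat.
by case: (all _ l1); case: (all _ l2); case: (peval v a); case: (peval v b).
Qed.

Lemma ded_mp n (G : form n -> Prop) a b : ded G a -> provable (Imp a b) -> ded G b.
Proof.
move=> [l [H P]] Pab; exists l; split => //.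
apply: taut_imp (prov_and P Pab) => v /=.
by case: (peval v (conjl l)); case: (peval v a); case: (peval v b).
Qed.

Lemma ded_taut n (G : form n -> Prop) a b :
  ded G a -> (forall v, peval v a -> peval v b) -> ded G b.
Proof.
move=> Da H; apply: ded_mp Da _; apply: Ax_taut => v /=.
by case E: (peval v a) => //=; rewrite (H v E).
Qed.

Lemma ded_deduction n (G : form n -> Prop) g b : ded (addf G g) b -> ded G (Imp g b).
Proof.
move=> [l [H P]].
have [l' [H' I']] : exists l', (forall x, In x l' -> G x) /\
   forall v, all (peval v) l' -> peval v g -> all (peval v) l.
  elim: l H {P} => [|a l IH] H; first by exists nil.
  have [l' [H' I']] := IH (fun x hx => H x (or_intror hx)).
  case: (H a (or_introl erefl)) => [Ga|->].
    exists (a :: l'); split; first by move=> x [<-|/H'].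
    by move=> v /= /andP[-> A] B; apply: I'.
  exists l'; split => // v A B /=; rewrite B; exact: I'.
exists l'; split => //.
apply: taut_imp P => v /=; rewrite !peval_conjl.
case E: (all _ l') => //=; case Eg: (peval v g) => //=.
by rewrite (I' v E Eg); case: (peval v b).
Qed.

Lemma ded_empty n g : ded (fun _ : form n => False) g -> provable g.
Proof.
move=> [[|a l] [H P]]; last by case: (H a (or_introl erefl)).
apply: R_MP P; apply: Ax_taut => v /=. by case: (v (Atom 0)).
Qed.

Lemma mcs_ded n (G : form n -> Prop) g : MCS G -> ded G g -> G g.
Proof.
move=> [C M] D; apply: M => D2; apply: C.
have := ded_deduction D2 => D3.
apply: ded_taut (ded_and D D3) _ => v /=.
by case: (peval v g); case: (v (Atom 0)).
Qed.

Lemma mcs_prov n (G : form n -> Prop) g : MCS G -> provable g -> G g.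
Proof. move=> M P; apply: mcs_ded M (ded_prov _ P). Qed.

Lemma mcs_imp n (G : form n -> Prop) a b : MCS G -> G a -> provable (Imp a b) -> G b.
Proof. move=> M Ga P; apply: mcs_ded M (ded_mp (ded_ax Ga) P). Qed.

Lemma mcs_neg n (G : form n -> Prop) g : MCS G -> G (Neg g) <-> ~ G g.
Proof.
move=> M; split.
  move=> Gn Gg; case: M => C _; apply: C.
  apply: ded_taut (ded_and (ded_ax Gg) (ded_ax Gn)) _ => v /=.
  by case: (peval v g); case: (v (Atom 0)).
move=> nG; apply: (mcs_ded M).
have nC : ~ consistent (addf G g) by move=> H; apply: nG; case: M => _ M; apply: M.
have D : ded (addf G g) (Bot n) by apply: NNPP.
apply: ded_taut (ded_deduction D) _ => v /=.
by case: (peval v g); case: (v (Atom 0)).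
Qed.

Lemma mcs_and n (G : form n -> Prop) a b : MCS G -> G (And a b) <-> G a /\ G b.
Proof.
move=> M; split.
  move=> H; split; apply: (mcs_imp M H); apply: Ax_taut => v /=;
  by case: (peval v a); case: (peval v b).
move=> [Ha Hb]; apply: (mcs_ded M); exact: ded_and (ded_ax Ha) (ded_ax Hb).
Qed.

Lemma mcs_iff n (G : form n -> Prop) a b : MCS G -> provable (Iff a b) -> G a <-> G b.
Proof.
move=> M P; split => H; apply: (mcs_imp M H); apply: taut_imp P => v /=;
by case: (peval v a); case: (peval v b).
Qed.

Lemma box_mono n C (a b : form n) : provable (Imp a b) -> provable (Imp (Box C a) (Box C b)).
Proof.
move=> P.
have E : provable (Iff a (And b a)).
  apply: taut_imp P => v /=; by case: (peval v a); case: (peval v b).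
have E2 := R_RE C E.
apply: taut_imp (prov_and E2 (Ax_mono C b a)) => v /=.
by case: (v (Box C a)); case: (v (Box C (And b a))); case: (v (Box C b)).
Qed.

Lemma mcs_box_mono n (G : form n -> Prop) C a b :
  MCS G -> G (Box C a) -> provable (Imp a b) -> G (Box C b).
Proof. move=> M H P; exact: mcs_imp M H (box_mono C P). Qed.

Lemma mcs_superadd n (G : form n -> Prop) (C1 C2 : {set 'I_n}) a b : MCS G -> [disjoint C1 & C2] ->
  G (Box C1 a) -> G (Box C2 b) -> G (Box (C1 :|: C2) (And a b)).
Proof.
move=> M D H1 H2; apply: (mcs_imp M _ (Ax_superadd a b D)).
by apply/(mcs_and _ _ M).
Qed.

Lemma mcs_nobot n (G : form n -> Prop) C a : MCS G -> G (Box C a) -> provable (Imp a (Bot n)) -> False.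
Proof.
move=> M H P; have := mcs_box_mono M H P.
by apply/(mcs_neg _ M); apply: mcs_prov M (Ax_nobot C).
Qed.

Fixpoint enc {n} (f : form n) : GenTree.tree (nat + {set 'I_n}) :=
  match f with
  | Atom p => GenTree.Node 0 [:: GenTree.Leaf (inl p)]
  | Neg a => GenTree.Node 1 [:: enc a]
  | And a b => GenTree.Node 2 [:: enc a; enc b]
  | Box C a => GenTree.Node 3 [:: GenTree.Leaf (inr C); enc a]
  | FI C a => GenTree.Node 4 [:: GenTree.Leaf (inr C); enc a]
  end.

Lemma enc_inj n : injective (@enc n).
Proof.
elim=> [p|a IHa|a IHa b IHb|C a IHa|C a IHa] [q|c|c d|D c|D c] //=.
- by case=> ->.
- by case=> /IHa ->.
- by case=> /IHa -> /IHb ->.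
- by case=> -> /IHa ->.
- by case=> -> /IHa ->.
Qed.

Definition code {n} (f : form n) : nat := pickle (enc f).

Lemma code_inj n : injective (@code n).
Proof. move=> a b /(pcan_inj pickleK); exact: enc_inj. Qed.

Fixpoint stage {n} (S : form n -> Prop) (k : nat) : form n -> Prop :=
  match k with
  | 0 => S
  | k'.+1 => fun h => stage S k' h \/
                      (code h = k' /\ consistent (addf (stage S k') h))
  end.

Lemma stage_le n (S : form n -> Prop) k m h : stage S k h -> stage S (m + k) h.
Proof. elim: m => [|m IH] //= H; left; exact: IH. Qed.

Lemma stage_leq n (S : form n -> Prop) k k' h : k <= k' -> stage S k h -> stage S k' h.
Proof. move=> le; rewrite -(subnK le); exact: stage_le. Qed.

Lemma stage_cons n (S : form n -> Prop) k : consistent S -> consistent (stage S k).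
Proof.
move=> CS; elim: k => [|k IH] //=.
case: (classic (exists h, code h = k /\ consistent (addf (stage S k) h))).
  move=> [h [ch Ch]] D; apply: Ch; apply: ded_mono D => x [Hx|[cx _]].
    by left.
  by right; apply: code_inj; rewrite cx ch.
move=> nE D; apply: IH; apply: ded_mono D => x [Hx|[cx Cx]] //.
by case: nE; exists x.
Qed.

Definition lind {n} (S : form n -> Prop) : form n -> Prop := fun h => exists k, stage S k h.

Lemma lind_list n (S : form n -> Prop) (l : list (form n)) :
  (forall x, In x l -> lind S x) -> exists k, forall x, In x l -> stage S k x.
Proof.
elim: l => [|a l IH] H; first by exists 0.
have [k Hk] := IH (fun x hx => H x (or_intror hx)).
have [k' Hk'] := H a (or_introl erefl).
exists (maxn k k') => x [<-|hx].
  apply: stage_leq Hk'; exact: leq_maxr.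
apply: stage_leq (Hk x hx); exact: leq_maxl.
Qed.

Lemma lindenbaum n (S : form n -> Prop) : consistent S ->
  exists G, MCS G /\ forall x, S x -> G x.
Proof.
move=> CS; exists (lind S); split; last by move=> x Sx; exists 0.
split.
  move=> [l [Hl P]]; have [k Hk] := lind_list Hl.
  exact: (@stage_cons _ _ k CS (ex_intro _ l (conj Hk P))).
move=> g Cg; exists (code g).+1; right; split => //.
move=> D; apply: Cg; apply: ded_mono D => x [Hx|->]; [left; by exists (code g)|by right].
Qed.

Lemma cons_single n (f : form n) : ~ provable (Imp f (Bot n)) -> consistent (addf (fun _ => False) f).
Proof.
move=> nP D; apply: nP; apply: ded_empty; exact: ded_deduction D.
Qed.

Lemma definability n (a b : form n) :
  (forall G, MCS G -> G a -> G b) -> provable (Imp a b).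
Proof.
move=> H; apply: NNPP => nP.
have C : consistent (addf (addf (fun _ => False) a) (Neg b)).
  move=> D; apply: nP; have D2 := ded_empty (ded_deduction (ded_deduction D)).
  apply: taut_imp D2 => v /=; by case: (peval v a); case: (peval v b); case: (v (Atom 0)).
have [G [M HG]] := lindenbaum C.
have Ga : G a by apply: HG; left; right.
have Gnb : G (Neg b) by apply: HG; right.
by move/(mcs_neg _ M): Gnb; apply; apply: H.
Qed.

Definition mst n := {G : form n -> Prop | MCS G}.
Notation sv G := (proj1_sig G).

Definition box0 {n} (G : form n -> Prop) : form n -> Prop := fun f => G (Box set0 f).

Definition ufun {n} (G : mst n) : mst n :=
  match excluded_middle_informative (MCS (box0 (sv G))) with
  | left p => exist _ _ p
  | right _ => G
  end.

Definition ceff {n} (G : mst n) (C : {set 'I_n}) (X : mst n -> Prop) : Prop :=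
  if C == setT then
    (if n == 0 then X (ufun G)
     else forall phi, (forall D : mst n, sv D phi -> ~ X D) -> ~ sv G (Box set0 phi))
  else exists phi, sv G (Box C phi) /\ forall D : mst n, sv D phi -> X D.

Lemma n0_setT n (C : {set 'I_n}) : n = 0 -> C = setT.
Proof. move=> n0; subst n; apply/setP => -[m lt]; by []. Qed.

Lemma npos_set0 n : n != 0 -> (set0 : {set 'I_n}) != setT.
Proof.
move=> nz; apply/negP => /eqP E.
have lt : 0 < n by rewrite lt0n.
have : Ordinal lt \in (set0 : {set 'I_n}) by rewrite E inE.
by rewrite inE.
Qed.

Lemma disj0 n (A : {set 'I_n}) : [disjoint set0 & A].
Proof. by rewrite disjoints_subset sub0set. Qed.

Lemma disjT n (D : {set 'I_n}) : [disjoint setT & D] -> D = set0.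
Proof. by rewrite disjoint_sym disjoints_subset setCT subset0 => /eqP. Qed.

Lemma box0_conj n (G : form n -> Prop) (l : list (form n)) : MCS G ->
  (forall x, In x l -> G (Box set0 x)) -> G (Box set0 (conjl l)).
Proof.
move=> M; elim: l => [|a l IH] H /=; first exact: mcs_prov M (Ax_top set0).
rewrite -(setU0 set0); apply: mcs_superadd M (disj0 _) _ _.
  exact: H (or_introl erefl).
exact: IH (fun x hx => H x (or_intror hx)).
Qed.

Lemma box0_MCS n (G : form n -> Prop) : n = 0 -> MCS G -> MCS (box0 G).
Proof.
move=> n0 M; split.
  move=> [l [Hl P]]; apply: (mcs_nobot M (box0_conj M Hl) P).
move=> g Cg; rewrite /box0.
case: (classic (G (Box set0 (Neg g)))) => H.
  case: Cg; apply: ded_taut (ded_and (ded_ax (or_introl H : addf (box0 G) g (Neg g)))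
                               (ded_ax (or_intror erefl : addf (box0 G) g g))) _.
  by move=> v /=; case: (peval v g); case: (v (Atom 0)).
move/(mcs_neg _ M): H => H.
have := mcs_imp M H (Ax_Nmax g).
by rewrite (n0_setT set0 n0).
Qed.

Lemma ufun_eq n (G : mst n) : n = 0 -> sv (ufun G) = box0 (sv G).
Proof.
move=> n0; rewrite /ufun; case: excluded_middle_informative => [p|np] //.
by case: np; apply: box0_MCS n0 (proj2_sig G).
Qed.

Lemma ceff_mono n (G : mst n) C (X Y : mst n -> Prop) :
  (forall x, X x -> Y x) -> ceff G C X -> ceff G C Y.
Proof.
move=> XY; rewrite /ceff; case: (C == setT); last first.
  by move=> [phi [H1 H2]]; exists phi; split => // D /H2 /XY.
case: (n == 0); first exact: XY.
move=> H phi Hphi; apply: H => D Dp XD; exact: Hphi D Dp (XY D XD).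
Qed.

Lemma ceff_pl1 n (G : mst n) C : ~ ceff G C (fun _ => False).
Proof.
have MG := proj2_sig G.
rewrite /ceff; case: (C == setT).
  case: (n == 0) => //.
  move=> H; apply: (H (Top n)) => [D _ []|].
  exact: mcs_prov MG (Ax_top set0).
move=> [phi [H1 H2]]; apply: mcs_nobot MG H1 _; apply: definability => D MD Dphi.
by case: (H2 (exist _ D MD) Dphi).
Qed.

Lemma ceff_pl2 n (G : mst n) C : ceff G C (fun _ => True).
Proof.
have MG := proj2_sig G.
rewrite /ceff; case: (C == setT).
  case: (n == 0) => //.
  move=> phi H Gp; apply: mcs_nobot MG Gp _; apply: definability => D MD Dp.
  by case: (H (exist _ D MD) Dp I).
exists (Top n); split => //; exact: mcs_prov MG (Ax_top C).
Qed.

Lemma ceff_pl4 n (G : mst n) (C D : {set 'I_n}) (X Y : mst n -> Prop) : [disjoint C & D] ->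
  ceff G C X -> ceff G D Y -> ceff G (C :|: D) (fun x => X x /\ Y x).
Proof.
move=> dCD; rewrite /ceff.
have MG := proj2_sig G.
case: (eqVneq n 0) => [n0|nn0].
  rewrite (n0_setT C n0) (n0_setT D n0) setUid eqxx.
  by move=> HX HY; split.
case: (eqVneq C setT) => [eC|nC]; case: (eqVneq D setT) => [eD|nD].
- rewrite eC in dCD; have := disjT dCD; rewrite eD => E.
  by case/negP: (npos_set0 nn0); rewrite E.
- have D0 : D = set0 by apply: disjT; rewrite -eC.
  rewrite D0 in nD *; rewrite eC setU0 eqxx.
  move=> HX [psi [Gpsi Hpsi]] chi Hchi Gchi.
  apply: (HX (And chi psi)).
    move=> E /(mcs_and _ _ (proj2_sig E)) [e1 e2] XE.
    exact: Hchi E e1 (conj XE (Hpsi E e2)).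
  rewrite -(setU0 set0); exact: mcs_superadd MG (disj0 _) Gchi Gpsi.
- have C0 : C = set0 by apply: disjT; rewrite disjoint_sym -eD.
  rewrite C0 in nC *; rewrite eD set0U eqxx.
  move=> [phi [Gphi Hphi]] HY chi Hchi Gchi.
  apply: (HY (And chi phi)).
    move=> E /(mcs_and _ _ (proj2_sig E)) [e1 e2] YE.
    exact: Hchi E e1 (conj (Hphi E e2) YE).
  rewrite -(setU0 set0); exact: mcs_superadd MG (disj0 _) Gchi Gphi.
- idtac.
  case: (eqVneq (C :|: D) setT) => [eU|nU].
    move=> [phi [Gphi Hphi]] [psi [Gpsi Hpsi]] chi Hchi Gchi.
    have := mcs_superadd MG dCD Gphi Gpsi; rewrite eU => GU.
    have G2 := mcs_superadd MG (disj0 setT) Gchi GU; rewrite set0U in G2.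
    apply: mcs_nobot MG G2 _; apply: definability => E ME.
    move/(mcs_and _ _ ME) => [e1 /(mcs_and _ _ ME) [e2 e3]]; exfalso.
    exact: Hchi (exist _ E ME) e1 (conj (Hphi (exist _ E ME) e2) (Hpsi (exist _ E ME) e3)).
  
  move=> [phi [Gphi Hphi]] [psi [Gpsi Hpsi]].
  exists (And phi psi); split; first exact: mcs_superadd MG dCD Gphi Gpsi.
  move=> E /(mcs_and _ _ (proj2_sig E)) [e1 e2]; split; [exact: Hphi|exact: Hpsi].
Qed.

Lemma ceff_pl5 n (G : mst n) (X : mst n -> Prop) :
  ~ ceff G set0 X <-> ceff G setT (fun x => ~ X x).
Proof.
rewrite /ceff.
case: (eqVneq n 0) => [n0|nn0].
  by rewrite (n0_setT set0 n0) eqxx.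
rewrite (negbTE (npos_set0 nn0)) eqxx; split.
  move=> H phi Hphi Gphi; apply: H; exists phi; split => // E Ep.
  exact: NNPP (Hphi E Ep).
move=> H [phi [Gphi Hphi]]; apply: (H phi) => // E Ep; exact (fun nx => nx (Hphi E Ep)).
Qed.

Lemma box_lemma n (G : mst n) C psi : sv G (Box C psi) <-> ceff G C (fun D => sv D psi).
Proof.
have MG := proj2_sig G.
rewrite /ceff.
case: (eqVneq n 0) => [n0|nn0].
  rewrite (n0_setT C n0) eqxx ufun_eq // /box0 (n0_setT set0 n0); done.
case: (eqVneq C setT) => [->|nC].
  split.
    move=> GT phi Hphi G0.
    have Gn : sv G (Box set0 (Neg psi)).
      apply: mcs_box_mono MG G0 _; apply: definability => E ME Ep.
      exact: (proj2 (mcs_neg _ ME) (Hphi (exist _ E ME) Ep)).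
    have := mcs_superadd MG (disj0 setT) Gn GT; rewrite set0U => GB.
    apply: mcs_nobot MG GB _; apply: Ax_taut => v /=.
    by case: (peval v psi); case: (v (Atom 0)).
  move=> H.
  have : ~ sv G (Box set0 (Neg psi)).
    apply: H => E Ep En; exact: (proj1 (mcs_neg _ (proj2_sig E)) Ep En).
  move/(mcs_neg _ MG) => H2; exact: mcs_imp MG H2 (Ax_Nmax psi).
split; first by move=> H; exists psi.
move=> [phi [Gphi Hphi]]; apply: mcs_box_mono MG Gphi _; apply: definability => E ME Ep.
exact: Hphi (exist _ E ME) Ep.
Qed.

Definition CM n (h : inhabited (mst n)) : model n :=
  @Model n (mst n) h (@ceff n) (fun p G => sv G (Atom p)).

Lemma CM_playable n h : playable (@CM n h).
Proof.
move=> G; split.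
- exact: ceff_pl1.
- exact: ceff_pl2.
- move=> C X Y XY; exact: ceff_mono.
- move=> C D X Y; exact: ceff_pl4.
- exact: ceff_pl5.
Qed.

Lemma truth n h (G : mst n) f : sat (@CM n h) G f <-> sv G f.
Proof.
elim: f G => [p|a IH|a IHa b IHb|C a IH|C a IH] G /=.
- done.
- rewrite (mcs_neg _ (proj2_sig G)); split => H1 H2; apply: H1; exact/(IH G).
- rewrite (mcs_and _ _ (proj2_sig G)); split => -[H1 H2]; split;
  by [apply/(IHa G)|apply/(IHb G)].
- rewrite box_lemma; split; apply: ceff_mono => x /(IH x) //.
- rewrite (mcs_iff (proj2_sig G) (Ax_FI C a)).
  rewrite (mcs_and _ _ (proj2_sig G)) !(mcs_neg _ (proj2_sig G)) !box_lemma.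
  have E1 : forall X Y : mst n -> Prop, (forall x, X x <-> Y x) -> ceff G C X <-> ceff G C Y.
    by move=> X Y XY; split; apply: ceff_mono => x /XY.
  rewrite (E1 _ _ (fun x => IH x)).
  rewrite (E1 (fun u => ~ sat (CM h) u a) (fun D => sv D (Neg a))) //.
  move=> x; rewrite (mcs_neg _ (proj2_sig x)); split => H1 H2; apply: H1; exact/(IH x).
Qed.

Definition asb (P : Prop) : bool := if excluded_middle_informative P then true else false.

Lemma asbT (P : Prop) : asb P = true <-> P.
Proof. by rewrite /asb; case: excluded_middle_informative. Qed.

Lemma asb_neg (P : Prop) : ~~ asb P = asb (~ P).
Proof.
rewrite /asb; case: (excluded_middle_informative P) => p;
case: (excluded_middle_informative (~ P)) => q //; exfalso; tauto.
Qed.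

Lemma asb_and (P Q : Prop) : asb P && asb Q = asb (P /\ Q).
Proof.
rewrite /asb; case: (excluded_middle_informative P) => p;
case: (excluded_middle_informative Q) => q;
case: (excluded_middle_informative (P /\ Q)) => r //; exfalso; tauto.
Qed.

Lemma peval_sat n (M : model n) w (f : form n) :
  peval (fun g => asb (sat M w g)) f = asb (sat M w f).
Proof.
elim: f => [p|a IH|a IHa b IHb|C a|C a] //=.
- by rewrite IH asb_neg.
- by rewrite IHa IHb asb_and.
Qed.

Lemma soundness n (f : form n) :
  provable f -> forall M : model n, playable M -> forall w : st M, sat M w f.
Proof.
elim=> {f} [f Tf|C|C|f|C f g|C1 C2 f1 f2 D|C f|f g _ IH1 _ IH2|C f g _ IH] M PM w /=.
- by apply/asbT; rewrite -peval_sat; apply: Tf.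
- case: (PM w) => P1 _ P3 _ _ H; apply: (P1 C); apply: P3 H => x; tauto.
- case: (PM w) => _ P2 P3 _ _; apply: P3 (P2 C) => x; tauto.
- case: (PM w) => _ _ P3 _ P5 [H1 H2]; apply: H2.
  apply: P3 (proj1 (P5 _) H1) => x; exact: NNPP.
- case: (PM w) => _ _ P3 _ _ [H1 H2]; apply: H2; apply: P3 H1 => x; tauto.
- case: (PM w) => _ _ _ P4 _ [[H1 H2] H3]; apply: H3; exact: P4 D H1 H2.
- tauto.
- have := IH1 M PM w; have := IH2 M PM w => /= H1 H2; apply: NNPP => H3; tauto.
- case: (PM w) => _ _ P3 _ _.
  have E : forall u, sat M u f <-> sat M u g.
    move=> u; have /= [I1 I2] := IH M PM u; split => H3; apply: NNPP => H4; tauto.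
  split; move=> [H1 H2]; apply: H2; apply: P3 H1 => u /E //.
Qed.

Theorem mainTheorem18 (n : nat) (f : form n) :
  provable f <-> (forall M : model n, playable M -> forall w : st M, sat M w f).
Proof.
split; first exact: soundness.
move=> H; apply: NNPP => nP.
have C : consistent (addf (fun _ => False) (Neg f)).
  apply: cons_single => P; apply: nP; apply: taut_imp P => v /=.
  by case: (peval v f); case: (v (Atom 0)).
have [G [M HG]] := lindenbaum C.
pose G0 : mst n := exist _ G M.
have := H (CM (inhabits G0)) (@CM_playable n (inhabits G0)) G0.
move/(truth (inhabits G0) G0) => /= Gf.
have Gn : G (Neg f) by apply: HG; right.
by move/(mcs_neg _ M): Gn.
Qed.
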